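(* There exists an NWBTS$(5;b)$ for every $b\ge 0$ with $b\equiv 3,4,6,7\pmod{10}$, and an NWBTS$(11;b)$ for every $b\ge0$ with $b\equiv 18,19,36,37\pmod{55}$.
   Context: A triple system TS$(v;b)$ is a pair $(V,\mathcal F)$, $V$ a set of $v\ge3$ points, $\mathcal F$ a multiset of $b$ 3-subsets (blocks). $\lambda_{x_1,\dots,x_j}$ is the number of blocks containing $\{x_1,\dots,x_j\}$; $j$-balanced means $|\lambda_{x_1,\dots,x_j}-\lambda_{y_1,\dots,y_j}|\le1$ for all $j$-subsets. Associated pair $(\lambda,\varepsilon)$ of $(v,b)$: integers with $3b=\lambda\binom v2+\varepsilon$, $-v/2<\varepsilon<v/2$. (C1): $v\equiv 2\pmod 3$ and $b\in\{\lfloor \lambda v(v-1)/6\rfloor,\lceil \lambda v(v-1)/6\rceil\}$ for an integer $\lambda$ with $\lambda\equiv1,2\pmod 3$ if $v\equiv5\pmod6$ and $\lambda\equiv 2,4\pmod 6$ if $v\equiv2\pmod 6$ ($\lambda$ is that of the associated pair; $\varepsilon\in\{\pm1,\pm2\}$). Defect graph (when all $\lambda_{x,y}\in\{\lambda-1,\lambda,\lambda+1\}$): graph on $V$ with edges the pairs with $\lambda_{x,y}=\lambda+1$ (label $+1$) or $\lambda-1$ (label $-1$); isomorphisms preserve labels. $G_1$: triangle, two $+1$ edges and one $-1$; $G_{-1}$: triangle, one $+1$ and two $-1$; $G_2$: 4-cycle, three $+1$ and one $-1$; $G_{-2}$: 4-cycle, one $+1$ and three $-1$. Under (C1), an NWBTS$(v;b)$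 is a 3-balanced TS$(v;b)$ with all $\lambda_{x,y}\in\{\lambda-1,\lambda,\lambda+1\}$ and defect graph isomorphic to $G_\varepsilon$. (The values of $b$ listed are exactly those for which $(5,b)$, resp. $(11,b)$, satisfies (C1).) *)

(* Defs.v *)
From mathcomp Require Import all_boot all_order all_algebra.
Set Implicit Arguments. Unset Strict Implicit. Unset Printing Implicit Defensive.
Import Order.TTheory GRing.Theory Num.Theory.
Local Open Scope ring_scope.

Definition is_TS (v : nat) (F : seq {set 'I_v}) (b : nat) : Prop :=
  (3 <= v)%N /\ size F = b /\ all (fun B : {set 'I_v} => #|B| == 3%N) F.

Definition lambdaS (v : nat) (F : seq {set 'I_v}) (S : {set 'I_v}) : nat :=
  count (fun B : {set 'I_v} => S \subset B) F.

Definition lambda2 (v : nat) (F : seq {set 'I_v}) (x y : 'I_v) : nat :=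
  lambdaS F [set x; y].

Definition j_balanced (v : nat) (F : seq {set 'I_v}) (j : nat) : Prop :=
  forall S T : {set 'I_v}, #|S| = j -> #|T| = j ->
    `|(lambdaS F S)%:Z - (lambdaS F T)%:Z| <= 1.

Definition assoc_pair (v b : nat) (lam eps : int) : Prop :=
  (3 * b)%:Z = lam * ('C(v, 2))%:Z + eps /\
  - (v%:Z) < 2 * eps /\ 2 * eps < v%:Z.

(* label of the pair {x,y} in the defect graph: lambda_{x,y} - lam
   (+1, -1 are edges with those labels, 0 is a non-edge) *)
Definition dlabel (v : nat) (F : seq {set 'I_v}) (lam : int) (x y : 'I_v) : int :=
  (lambda2 F x y)%:Z - lam.

Definition tri_lab (v : nat) (a b c : 'I_v) (s1 s2 s3 : int) (x y : 'I_v) : int :=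
  if [set x; y] == [set a; b] then s1
  else if [set x; y] == [set a; c] then s2
  else if [set x; y] == [set b; c] then s3
  else 0.

Definition cyc_lab (v : nat) (a b c d : 'I_v) (s1 s2 s3 s4 : int) (x y : 'I_v) : int :=
  if [set x; y] == [set a; b] then s1
  else if [set x; y] == [set b; c] then s2
  else if [set x; y] == [set c; d] then s3
  else if [set x; y] == [set d; a] then s4
  else 0.

(* the (labelled) defect graph is isomorphic to G_eps
   (isomorphism of the edge sets, i.e. ignoring isolated vertices) *)
Definition defect_iso_G (v : nat) (F : seq {set 'I_v}) (lam eps : int) : Prop :=
  if eps == 1 then
    exists a b c : 'I_v, [/\ uniq [:: a; b; c] &
      forall x y, x != y -> dlabel F lam x y = tri_lab a b c 1 1 (-1) x y]
  else if eps == -1 then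
    exists a b c : 'I_v, [/\ uniq [:: a; b; c] &
      forall x y, x != y -> dlabel F lam x y = tri_lab a b c 1 (-1) (-1) x y]
  else if eps == 2 then
    exists a b c d : 'I_v, [/\ uniq [:: a; b; c; d] &
      forall x y, x != y -> dlabel F lam x y = cyc_lab a b c d 1 1 1 (-1) x y]
  else if eps == -2 then
    exists a b c d : 'I_v, [/\ uniq [:: a; b; c; d] &
      forall x y, x != y -> dlabel F lam x y = cyc_lab a b c d 1 (-1) (-1) (-1) x y]
  else False.

Definition NWBTS (v : nat) (F : seq {set 'I_v}) (b : nat) : Prop :=
  is_TS F b /\ j_balanced F 3 /\
  exists lam eps : int, [/\ assoc_pair v b lam eps,
    (forall x y : 'I_v, x != y ->
       (lambda2 F x y)%:Z \in [:: lam - 1; lam; lam + 1]) &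
    defect_iso_G F lam eps].

(* Main.v *)
Require Import Defs.
From mathcomp Require Import all_boot all_order all_algebra.
From mathcomp Require Import zify.
Set Implicit Arguments. Unset Strict Implicit. Unset Printing Implicit Defensive.
Import Order.TTheory GRing.Theory Num.Theory.

Lemma count_enum (T : finType) (a : pred T) : count a (enum T) = #|a|.
Proof.
rewrite cardE /enum_mem count_filter size_filter.
by apply: eq_count => x; rewrite /= !inE andbT.
Qed.

Definition full v : seq {set 'I_v} := filter (fun B : {set 'I_v} => #|B| == 3%N) (enum {set 'I_v}).

Lemma size_full v : size (full v) = 'C(v, 3).
Proof.
rewrite size_filter count_enum; have := card_draws 'I_v 3; rewrite card_ord => <-.
by apply: eq_card => B; rewrite inE.
Qed.

Lemma full_uniq v : uniq (full v).
Proof. by rewrite filter_uniq // enum_uniq. Qed.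

Lemma mem_full v (B : {set 'I_v}) : (B \in full v) = (#|B| == 3%N).
Proof. by rewrite mem_filter mem_enum andbT. Qed.

Lemma lambdaS_uniq v (F : seq {set 'I_v}) (S : {set 'I_v}) :
  all (fun B : {set 'I_v} => #|B| == 3%N) F -> uniq F -> #|S| = 3%N ->
  lambdaS F S = (S \in F).
Proof.
move=> /allP Hc Hu HS; rewrite /lambdaS -(count_uniq_mem S Hu).
apply: eq_in_count => B /Hc /eqP HB /=.
rewrite eq_sym eqEcard HB HS leqnn andbT //.
Qed.

Lemma lambdaS_full v (S : {set 'I_v}) : #|S| = 3%N -> lambdaS (full v) S = 1%N.
Proof.
move=> HS; rewrite lambdaS_uniq ?full_uniq //.
  by rewrite mem_full HS.
by apply/allP => B; rewrite mem_full.
Qed.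

Definition rep (T : Type) k (s : seq T) := flatten (nseq k s).

Lemma count_rep (T : Type) (a : pred T) k s : count a (rep k s) = (k * count a s)%N.
Proof.
elim: k => [|k IH] //=; by rewrite /rep /= count_cat -/(rep k s) IH mulSn.
Qed.

Lemma size_rep (T : Type) k (s : seq T) : size (rep k s) = (k * size s)%N.
Proof. by rewrite -!count_predT count_rep. Qed.

Lemma lambda2_full v (x y : 'I_v) : x != y -> lambda2 (full v) x y = (v - 2)%N.
Proof.
move=> Hxy; rewrite /lambda2 /lambdaS count_filter count_enum.
set S := [set x; y].
have cS : #|S| = 2%N by rewrite cards2 Hxy.
clearbody S.
have -> : #|[predI (fun B : {set 'I_v} => S \subset B) & (fun B : {set 'I_v} => #|B| == 3%N)]|
   = #|[set z |: S | z in ~: S]|.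
  apply: eq_card => B; rewrite !inE; apply/andP/imsetP.
    case=> sSB /eqP cB.
    have cD : #|B :\: S| = 1%N by rewrite cardsDS // cB cS.
    have /cards1P [z Hz] : #|B :\: S| == 1%N by rewrite cD.
    have zB : z \in B :\: S by rewrite Hz set11.
    exists z; first by move: zB; rewrite !inE => /andP [].
    apply/setP => i; rewrite !inE.
    case iS: (i \in S).
      by rewrite orbT; move/subsetP: sSB; apply.
    rewrite orbF; apply/idP/eqP.
      move=> iB; have: i \in B :\: S by rewrite inE iS iB.
      by rewrite Hz inE => /eqP.
    by move=> ->; move: zB; rewrite inE => /andP [].
  case=> z; rewrite inE => zS ->; split.
    by apply/subsetP => i iS; rewrite inE iS orbT.
  by rewrite unfold_in /= cardsU1 zS cS.
rewrite card_in_imset.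
  by have := cardsC S; rewrite cS card_ord => E; rewrite -[in RHS]E addKn.
move=> z1 z2; rewrite !inE => z1S z2S E.
have : z1 \in z2 |: S by rewrite -E setU11.
by rewrite in_setU1 (negbTE z1S) orbF => /eqP.
Qed.

From mathcomp Require Import ring.
Local Open Scope ring_scope.

Lemma all_rep (T : Type) (a : pred T) k s : all a s -> all a (rep k s).
Proof. by move=> H; elim: k => [|k IH] //=; rewrite /rep /= all_cat H -/(rep k s) IH. Qed.

Lemma lambda2_ext v (F0 : seq {set 'I_v}) k (x y : 'I_v) : x != y ->
  lambda2 (F0 ++ rep k (full v)) x y = (lambda2 F0 x y + k * (v - 2))%N.
Proof.
move=> xy; rewrite /lambda2 /lambdaS count_cat count_rep.
by rewrite -/(lambdaS (full v) [set x; y]) -/(lambda2 (full v) x y) lambda2_full.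
Qed.

Lemma extend v (F0 : seq {set 'I_v}) b0 (lam0 eps : int) k :
  (3 <= v)%N -> size F0 = b0 -> all (fun B : {set 'I_v} => #|B| == 3%N) F0 -> uniq F0 ->
  assoc_pair v b0 lam0 eps ->
  (forall x y : 'I_v, x != y -> (lambda2 F0 x y)%:Z \in [:: lam0 - 1; lam0; lam0 + 1]) ->
  defect_iso_G F0 lam0 eps ->
  (3 * 'C(v,3) = (v-2) * 'C(v,2))%N ->
  NWBTS (F0 ++ rep k (full v)) (b0 + k * 'C(v,3)).
Proof.
move=> v3 sz c3 u0 [Ha1 [Ha2 Ha3]] Hv Hd HC; rewrite /NWBTS /is_TS.
split.
  split=> //; split; first by rewrite size_cat size_rep size_full sz.
  by rewrite all_cat c3 all_rep // ; apply/allP => B; rewrite mem_full.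
split.
  move=> S T cS cT.
  have E : forall U : {set 'I_v}, #|U| = 3%N ->
     lambdaS (F0 ++ rep k (full v)) U = ((U \in F0) + k)%N.
    move=> U cU; rewrite /lambdaS count_cat count_rep -/(lambdaS F0 U).
    by rewrite -/(lambdaS (full v) U) lambdaS_full // lambdaS_uniq // muln1.
  rewrite !E //.
  by case: (S \in F0); case: (T \in F0); rewrite ?PoszD /=; 
     rewrite ?addrKA ?opprD ?addrA ?subrr //; lia.
exists (lam0 + (k * (v - 2))%N%:Z), eps; split.
- split=> //.
  have H1 : ((3 * (k * 'C(v, 3)))%N%:Z = (k * (v-2))%N%:Z * ('C(v,2))%:Z).
    by rewrite -PoszM; congr Posz; rewrite mulnCA HC mulnA.
  by rewrite mulnDr PoszD H1 Ha1; ring.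
- move=> x y xy; rewrite lambda2_ext // PoszD.
  move: (Hv x y xy); rewrite !inE => /or3P [] /eqP ->; apply/or3P.
  + by apply: Or31; apply/eqP; ring.
  + by apply: Or32; apply/eqP; ring.
  + by apply: Or33; apply/eqP; ring.
- have Dl : forall x y, x != y -> dlabel (F0 ++ rep k (full v)) (lam0 + (k * (v - 2))%N%:Z) x y
                                = dlabel F0 lam0 x y.
    by move=> x y xy; rewrite /dlabel lambda2_ext // PoszD; ring.
  move: Hd; rewrite /defect_iso_G.
  case: ifP => _.
    by case=> a [b [c [u H]]]; exists a, b, c; split=> // x y xy; rewrite Dl // H.
  case: ifP => _.
    by case=> a [b [c [u H]]]; exists a, b, c; split=> // x y xy; rewrite Dl // H.
  case: ifP => _.
    by case=> a [b [c [d [u H]]]]; exists a, b, c, d; split=> // x y xy; rewrite Dl // H.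
  case: ifP => _ //.
  by case=> a [b [c [d [u H]]]]; exists a, b, c, d; split=> // x y xy; rewrite Dl // H.
Qed.

Definition ordn n (i : nat) : 'I_n.+1 := @Ordinal n.+1 (i %% n.+1)%N (ltn_pmod i (ltn0Sn n)).
Arguments ordn : clear implicits.
Lemma ordn_val n (x : 'I_n.+1) : ordn n (val x) = x.
Proof. by apply: val_inj; rewrite /= modn_small. Qed.

Definition tri n (t : nat * nat * nat) : seq 'I_n.+1 :=
  [:: ordn n t.1.1; ordn n t.1.2; ordn n t.2].
Definition base n (L : seq (nat * nat * nat)) : seq {set 'I_n.+1} :=
  map (fun t => [set x in tri n t]) L.
Definition lam2c n L (x y : 'I_n.+1) : nat :=
  count (fun t => (x \in tri n t) && (y \in tri n t)) L.
Definition dec n (P : pred 'I_n.+1) : seq nat := [seq i <- iota 0 n.+1 | P (ordn n i)].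
Arguments lam2c : clear implicits.
Arguments dec : clear implicits.

Lemma lambda2_base n L (x y : 'I_n.+1) : lambda2 (base n L) x y = lam2c n L x y.
Proof.
rewrite /lambda2 /lambdaS /base count_map; apply: eq_count => t /=.
by rewrite subUset !sub1set !inE.
Qed.

Lemma card_base n L : all (fun t => uniq (tri n t)) L ->
  all (fun B : {set 'I_n.+1} => #|B| == 3%N) (base n L).
Proof.
move=> /allP H; apply/allP => B /mapP [t /H ut ->].
by rewrite cardsE; move/card_uniqP: ut => ->.
Qed.

Lemma dec_inj n (P Q : pred 'I_n.+1) : dec n P = dec n Q -> P =1 Q.
Proof.
move=> E i; have := congr1 (fun s => val i \in s) E.
by rewrite /= !mem_filter mem_iota /= add0n ltn_ord !andbT ordn_val.
Qed.

Lemma uniq_base n L :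
  uniq (map (fun t => dec n (fun i => i \in tri n t)) L) -> uniq (base n L).
Proof.
move=> H; apply: (@map_uniq _ _ (fun B : {set 'I_n.+1} => dec n (fun i => i \in B))).
rewrite /base -map_comp; move: H; congr uniq; apply: eq_map => t /=.
by rewrite /dec; apply: eq_filter => i; rewrite in_set.
Qed.

Definition d2 n (x y : 'I_n.+1) := dec n (fun i => (i == x) || (i == y)).

Lemma set2eq n (x y a b : 'I_n.+1) :
  ([set x; y] == [set a; b]) = (d2 x y == d2 a b).
Proof.
apply/eqP/eqP => E.
  by rewrite /d2 /dec; apply: eq_filter => i; have := congr1 (fun S : {set 'I_n.+1} => ordn n i \in S) E; rewrite !inE.
by apply/setP => i; rewrite !inE; exact: (dec_inj E i).
Qed.

Definition tri_labc n (a b c : 'I_n.+1) (s1 s2 s3 : int) (x y : 'I_n.+1) : int :=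
  if d2 x y == d2 a b then s1
  else if d2 x y == d2 a c then s2
  else if d2 x y == d2 b c then s3
  else 0.
Definition cyc_labc n (a b c d : 'I_n.+1) (s1 s2 s3 s4 : int) (x y : 'I_n.+1) : int :=
  if d2 x y == d2 a b then s1
  else if d2 x y == d2 b c then s2
  else if d2 x y == d2 c d then s3
  else if d2 x y == d2 d a then s4
  else 0.

Lemma tri_labE n (a b c : 'I_n.+1) s1 s2 s3 x y :
  tri_lab a b c s1 s2 s3 x y = tri_labc a b c s1 s2 s3 x y.
Proof. by rewrite /tri_lab /tri_labc !set2eq. Qed.
Lemma cyc_labE n (a b c d : 'I_n.+1) s1 s2 s3 s4 x y :
  cyc_lab a b c d s1 s2 s3 s4 x y = cyc_labc a b c d s1 s2 s3 s4 x y.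
Proof. by rewrite /cyc_lab /cyc_labc !set2eq. Qed.

Definition labc n (eps : int) (x y : 'I_n.+1) : int :=
  let a := ordn n 0 in let b := ordn n 1 in let c := ordn n 2 in let d := ordn n 3 in
  if eps == 1 then tri_labc a b c 1 1 (-1) x y
  else if eps == -1 then tri_labc a b c 1 (-1) (-1) x y
  else if eps == 2 then cyc_labc a b c d 1 1 1 (-1) x y
  else cyc_labc a b c d 1 (-1) (-1) (-1) x y.
Arguments labc : clear implicits.

Definition pchk n L (lam eps : int) (x y : 'I_n.+1) : bool :=
  (x != y) ==> (((lam2c n L x y)%:Z \in [:: lam - 1; lam; lam + 1]) &&
                ((lam2c n L x y)%:Z - lam == labc n eps x y)).
Arguments pchk : clear implicits.

Definition chk n (L : seq (nat * nat * nat)) (lam eps : int) : bool :=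
  [&& all (fun t => uniq (tri n t)) L,
      uniq (map (fun t => dec n (fun i => i \in tri n t)) L),
      (3 * size L)%N%:Z == lam * ('C(n.+1, 2))%:Z + eps,
      - (n.+1)%:Z < 2 * eps, 2 * eps < (n.+1)%:Z,
      uniq [:: ordn n 0; ordn n 1; ordn n 2; ordn n 3],
      eps \in [:: 1; -1; 2; -2] &
      all (fun i => all (fun j => pchk n L lam eps (ordn n i) (ordn n j))
         (iota 0 n.+1)) (iota 0 n.+1)].

Lemma forall_ord n (P : 'I_n.+1 -> 'I_n.+1 -> bool) :
  all (fun i => all (fun j => P (ordn n i) (ordn n j)) (iota 0 n.+1)) (iota 0 n.+1) ->
  forall x y, P x y.
Proof.
move=> /allP H x y.
have hx : val x \in iota 0 n.+1 by rewrite mem_iota ltn_ord.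
have hy : val y \in iota 0 n.+1 by rewrite mem_iota ltn_ord.
have /allP H2 := H _ hx; have := H2 _ hy; by rewrite !ordn_val.
Qed.

Lemma chk_ok n L lam eps k :
  chk n L lam eps -> (3 <= n.+1)%N ->
  (3 * 'C(n.+1,3) = (n.+1-2) * 'C(n.+1,2))%N ->
  NWBTS (base n L ++ rep k (full n.+1)) (size L + k * 'C(n.+1,3)).
Proof.
case/and5P => H1 H2 /eqP H3 H4 /and4P [H5 H6 H7 H8] Hv HC.
have Hall := forall_ord H8; rewrite /pchk in Hall.
apply: (@extend _ _ _ lam eps k) => //.
- by rewrite /base size_map.
- exact: card_base.
- exact: uniq_base.
- by move=> x y xy; rewrite lambda2_base; have := Hall x y; rewrite xy /= => /andP [].
- have Hl : forall x y : 'I_n.+1, x != y -> dlabel (base n L) lam x y = labc n eps x y.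
    by move=> x y xy; rewrite /dlabel lambda2_base; have := Hall x y; rewrite xy /= => /andP [_ /eqP].
  have u3 : uniq [:: ordn n 0; ordn n 1; ordn n 2].
    by move: H6; rewrite /= !inE !negb_or => /and4P [/and3P [-> -> _] /andP [-> _] _ _].
  rewrite /defect_iso_G.
  case: ifP => e1.
    exists (ordn n 0), (ordn n 1), (ordn n 2); split=> // x y xy.
    by rewrite Hl // tri_labE /labc e1.
  case: ifP => e2.
    exists (ordn n 0), (ordn n 1), (ordn n 2); split=> // x y xy.
    by rewrite Hl // tri_labE /labc e1 e2.
  case: ifP => e3.
    exists (ordn n 0), (ordn n 1), (ordn n 2), (ordn n 3); split=> // x y xy.
    by rewrite Hl // cyc_labE /labc e1 e2 e3.
  case: ifP => e4.
    exists (ordn n 0), (ordn n 1), (ordn n 2), (ordn n 3); split=> // x y xy.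
    by rewrite Hl // cyc_labE /labc e1 e2 e3.
  by move: H7; rewrite !inE e1 e2 e3 e4.
Qed.

Definition L5_3 : seq (nat*nat*nat) := [:: (0,1,3); (0,1,4); (2,3,4)].
Lemma chk5_3 : chk 4 L5_3 (1)%:Z (- 1%:Z). Proof. by vm_compute. Qed.
Definition L5_4 : seq (nat*nat*nat) := [:: (0,1,2); (0,1,4); (1,2,3); (2,3,4)].
Lemma chk5_4 : chk 4 L5_4 (1)%:Z 2%:Z. Proof. by vm_compute. Qed.
Definition L5_6 : seq (nat*nat*nat) := [:: (0,1,2); (0,1,3); (0,1,4); (0,2,4); (1,3,4); (2,3,4)].
Lemma chk5_6 : chk 4 L5_6 (2)%:Z (- 2%:Z). Proof. by vm_compute. Qed.
Definition L5_7 : seq (nat*nat*nat) := [:: (0,1,2); (0,1,3); (0,1,4); (0,2,3); (0,2,4); (1,3,4); (2,3,4)].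
Lemma chk5_7 : chk 4 L5_7 (2)%:Z 1%:Z. Proof. by vm_compute. Qed.
Definition L11_18 : seq (nat*nat*nat) := [:: (0,1,3); (0,1,5); (0,4,8); (0,6,7); (0,9,10); (1,4,9); (1,6,10); (1,7,8); (2,3,4); (2,5,10); (2,6,8); (2,7,9); (3,5,7); (3,6,9); (3,8,10); (4,5,6); (4,7,10); (5,8,9)].
Lemma chk11_18 : chk 10 L11_18 (1)%:Z (- 1%:Z). Proof. by vm_compute. Qed.
Definition L11_19 : seq (nat*nat*nat) := [:: (0,1,6); (0,1,9); (0,2,5); (0,4,8); (0,7,10); (1,2,3); (1,2,10); (1,4,7); (1,5,8); (2,3,4); (2,6,9); (2,7,8); (3,5,10); (3,6,7); (3,8,9); (4,5,6); (4,9,10); (5,7,9); (6,8,10)].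
Lemma chk11_19 : chk 10 L11_19 (1)%:Z 2%:Z. Proof. by vm_compute. Qed.
Definition L11_36 : seq (nat*nat*nat) := [:: (0,1,2); (0,1,5); (0,1,8); (0,2,6); (0,3,7); (0,4,5); (0,4,9); (0,6,10); (0,7,9); (0,8,10); (1,3,4); (1,3,6); (1,4,7); (1,5,6); (1,7,10); (1,8,9); (1,9,10); (2,3,9); (2,4,5); (2,4,9); (2,5,8); (2,6,7); (2,7,10); (2,8,10); (3,4,10); (3,5,8); (3,5,10); (3,6,9); (3,7,8); (4,6,8); (4,6,10); (4,7,8); (5,6,7); (5,7,9); (5,9,10); (6,8,9)].
Lemma chk11_36 : chk 10 L11_36 (2)%:Z (- 2%:Z). Proof. by vm_compute. Qed.
Definition L11_37 : seq (nat*nat*nat) := [:: (0,1,6); (0,1,8); (0,1,9); (0,2,3); (0,2,4); (0,2,7); (0,3,6); (0,4,7); (0,5,8); (0,5,10); (0,9,10); (1,2,8); (1,3,4); (1,3,10); (1,4,5); (1,5,7); (1,6,9); (1,7,10); (2,3,10); (2,4,6); (2,5,6); (2,5,9); (2,7,9); (2,8,10); (3,4,5); (3,5,9); (3,6,7); (3,7,8); (3,8,9); (4,6,10); (4,7,9); (4,8,9); (4,8,10); (5,6,8); (5,7,10); (6,7,8); (6,9,10)].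
Lemma chk11_37 : chk 10 L11_37 (2)%:Z 1%:Z. Proof. by vm_compute. Qed.
Definition L11_73 : seq (nat*nat*nat) := [:: (0,1,4); (0,1,5); (0,1,7); (0,1,8); (0,1,10); (0,2,4); (0,2,9); (0,2,10); (0,3,4); (0,3,5); (0,3,6); (0,3,9); (0,4,10); (0,5,8); (0,5,9); (0,6,7); (0,6,8); (0,6,9); (0,7,8); (0,7,10); (1,2,6); (1,2,8); (1,2,10); (1,3,6); (1,3,7); (1,3,9); (1,3,10); (1,4,6); (1,4,7); (1,4,9); (1,5,6); (1,5,8); (1,5,10); (1,7,9); (1,8,9); (2,3,5); (2,3,6); (2,3,7); (2,3,10); (2,4,5); (2,4,8); (2,4,9); (2,5,7); (2,5,10); (2,6,8); (2,6,9); (2,7,8); (2,7,9); (3,4,5); (3,4,7); (3,4,8); (3,5,8); (3,6,7); (3,8,9); (3,8,10); (3,9,10); (4,5,6); (4,5,7); (4,6,9); (4,6,10); (4,7,10); (4,8,9); (4,8,10); (5,6,9); (5,6,10); (5,7,8); (5,7,9); (5,9,10); (6,7,8); (6,7,10); (6,8,10); (7,9,10); (8,9,10)].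
Lemma chk11_73 : chk 10 L11_73 (4)%:Z (- 1%:Z). Proof. by vm_compute. Qed.
Definition L11_74 : seq (nat*nat*nat) := [:: (0,1,2); (0,1,3); (0,1,4); (0,1,5); (0,1,7); (0,2,3); (0,2,6); (0,2,8); (0,3,10); (0,4,6); (0,4,9); (0,4,10); (0,5,7); (0,5,9); (0,5,10); (0,6,8); (0,6,9); (0,7,8); (0,7,10); (0,8,9); (1,2,5); (1,2,6); (1,2,8); (1,2,9); (1,3,4); (1,3,7); (1,3,10); (1,4,8); (1,4,9); (1,5,6); (1,5,8); (1,6,9); (1,6,10); (1,7,8); (1,7,10); (1,9,10); (2,3,4); (2,3,8); (2,3,9); (2,3,10); (2,4,5); (2,4,7); (2,4,10); (2,5,6); (2,5,7); (2,6,8); (2,7,9); (2,7,10); (2,9,10); (3,4,6); (3,4,7); (3,5,6); (3,5,7); (3,5,8); (3,5,9); (3,6,7); (3,6,9); (3,8,9); (3,8,10); (4,5,7); (4,5,8); (4,5,9); (4,6,8); (4,6,10); (4,7,9); (4,8,10); (5,6,10); (5,8,10); (5,9,10); (6,7,8); (6,7,9); (6,7,10); (7,8,9); (8,9,10)].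
Lemma chk11_74 : chk 10 L11_74 (4)%:Z 2%:Z. Proof. by vm_compute. Qed.
Definition L11_91 : seq (nat*nat*nat) := [:: (0,1,4); (0,1,5); (0,1,7); (0,1,8); (0,1,9); (0,1,10); (0,2,3); (0,2,5); (0,2,6); (0,2,7); (0,2,10); (0,3,6); (0,3,7); (0,3,10); (0,4,6); (0,4,7); (0,4,8); (0,4,10); (0,5,8); (0,5,9); (0,5,10); (0,6,8); (0,6,9); (0,7,9); (0,8,9); (1,2,4); (1,2,5); (1,2,6); (1,2,9); (1,3,4); (1,3,6); (1,3,7); (1,3,8); (1,3,10); (1,4,8); (1,4,9); (1,5,6); (1,5,7); (1,5,9); (1,6,7); (1,6,10); (1,7,8); (1,8,10); (1,9,10); (2,3,6); (2,3,7); (2,3,9); (2,4,5); (2,4,8); (2,4,9); (2,4,10); (2,5,7); (2,5,10); (2,6,7); (2,6,8); (2,7,8); (2,8,9); (2,8,10); (2,9,10); (3,4,5); (3,4,6); (3,4,7); (3,4,9); (3,5,6); (3,5,8); (3,5,9); (3,5,10); (3,7,8); (3,8,9); (3,8,10); (3,9,10); (4,5,6); (4,5,8); (4,5,10); (4,6,9); (4,6,10); (4,7,8); (4,7,9); (4,7,10); (5,6,7); (5,6,8); (5,7,9); (5,7,10); (5,8,9); (6,7,9); (6,7,10); (6,8,9); (6,8,10); (6,9,10); (7,8,10); (7,9,10)].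
Lemma chk11_91 : chk 10 L11_91 (5)%:Z (- 2%:Z). Proof. by vm_compute. Qed.
Definition L11_92 : seq (nat*nat*nat) := [:: (0,1,3); (0,1,4); (0,1,5); (0,1,6); (0,1,7); (0,1,8); (0,2,3); (0,2,5); (0,2,6); (0,2,7); (0,2,9); (0,2,10); (0,3,5); (0,3,9); (0,3,10); (0,4,6); (0,4,7); (0,4,9); (0,4,10); (0,5,7); (0,5,8); (0,6,9); (0,6,10); (0,7,8); (0,8,9); (0,8,10); (1,2,4); (1,2,6); (1,2,8); (1,2,10); (1,3,4); (1,3,5); (1,3,7); (1,3,9); (1,4,8); (1,4,10); (1,5,6); (1,5,9); (1,5,10); (1,6,7); (1,6,9); (1,7,8); (1,7,9); (1,8,10); (1,9,10); (2,3,4); (2,3,6); (2,3,7); (2,3,8); (2,4,5); (2,4,8); (2,4,10); (2,5,7); (2,5,9); (2,5,10); (2,6,8); (2,6,9); (2,7,8); (2,7,9); (2,9,10); (3,4,6); (3,4,8); (3,4,9); (3,5,7); (3,5,8); (3,5,9); (3,6,7); (3,6,8); (3,6,10); (3,7,10); (3,8,10); (3,9,10); (4,5,6); (4,5,7); (4,5,8); (4,5,9); (4,6,7); (4,6,10); (4,7,9); (4,7,10); (4,8,9); (5,6,8); (5,6,9); (5,6,10); (5,7,10); (5,8,10); (6,7,8); (6,7,10); (6,8,9); (7,8,9); (7,9,10); (8,9,10)].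
Lemma chk11_92 : chk 10 L11_92 (5)%:Z 1%:Z. Proof. by vm_compute. Qed.
Definition L11_128 : seq (nat*nat*nat) := [:: (0,1,2); (0,1,3); (0,1,4); (0,1,5); (0,1,6); (0,1,8); (0,1,9); (0,1,10); (0,2,3); (0,2,5); (0,2,7); (0,2,8); (0,2,9); (0,3,6); (0,3,7); (0,3,8); (0,3,9); (0,3,10); (0,4,5); (0,4,6); (0,4,7); (0,4,8); (0,4,9); (0,4,10); (0,5,6); (0,5,8); (0,5,9); (0,5,10); (0,6,7); (0,6,8); (0,6,10); (0,7,8); (0,7,9); (0,7,10); (0,9,10); (1,2,3); (1,2,5); (1,2,6); (1,2,7); (1,2,10); (1,3,4); (1,3,5); (1,3,7); (1,3,8); (1,3,9); (1,4,6); (1,4,7); (1,4,8); (1,4,9); (1,4,10); (1,5,6); (1,5,7); (1,5,8); (1,5,10); (1,6,7); (1,6,8); (1,6,9); (1,7,9); (1,7,10); (1,8,9); (1,8,10); (1,9,10); (2,3,4); (2,3,5); (2,3,6); (2,3,7); (2,3,10); (2,4,5); (2,4,6); (2,4,7); (2,4,8); (2,4,9); (2,4,10); (2,5,6); (2,5,8); (2,5,9); (2,6,8); (2,6,9); (2,6,10); (2,7,8); (2,7,9); (2,7,10); (2,8,9); (2,8,10); (2,9,10); (3,4,5); (3,4,6); (3,4,8); (3,4,9); (3,4,10); (3,5,6); (3,5,7); (3,5,9); (3,5,10); (3,6,8); (3,6,9); (3,6,10); (3,7,8); (3,7,9); (3,7,10); (3,8,9); (3,8,10); (4,5,6); (4,5,7);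 (4,5,8); (4,5,10); (4,6,7); (4,6,10); (4,7,8); (4,7,9); (4,8,9); (4,9,10); (5,6,7); (5,6,9); (5,7,8); (5,7,9); (5,7,10); (5,8,9); (5,8,10); (5,9,10); (6,7,8); (6,7,9); (6,7,10); (6,8,9); (6,8,10); (6,9,10); (7,8,10); (8,9,10)].
Lemma chk11_128 : chk 10 L11_128 (7)%:Z (- 1%:Z). Proof. by vm_compute. Qed.
Definition L11_129 : seq (nat*nat*nat) := [:: (0,1,2); (0,1,3); (0,1,4); (0,1,5); (0,1,6); (0,1,8); (0,1,9); (0,1,10); (0,2,5); (0,2,6); (0,2,7); (0,2,8); (0,2,9); (0,2,10); (0,3,4); (0,3,5); (0,3,6); (0,3,7); (0,3,10); (0,4,5); (0,4,6); (0,4,7); (0,4,9); (0,4,10); (0,5,7); (0,5,8); (0,5,9); (0,6,7); (0,6,8); (0,6,10); (0,7,8); (0,7,9); (0,8,9); (0,8,10); (0,9,10); (1,2,3); (1,2,4); (1,2,5); (1,2,6); (1,2,7); (1,2,8); (1,2,10); (1,3,4); (1,3,5); (1,3,6); (1,3,7); (1,3,9); (1,4,5); (1,4,7); (1,4,8); (1,4,10); (1,5,6); (1,5,7); (1,5,9); (1,6,8); (1,6,9); (1,6,10); (1,7,8); (1,7,9); (1,7,10); (1,8,9); (1,8,10); (1,9,10); (2,3,4); (2,3,5); (2,3,6); (2,3,7); (2,3,8); (2,3,9); (2,3,10); (2,4,6); (2,4,7); (2,4,8); (2,4,9); (2,4,10); (2,5,7); (2,5,8); (2,5,9); (2,5,10);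 (2,6,7); (2,6,9); (2,6,10); (2,7,9); (2,8,9); (2,8,10); (3,4,6); (3,4,8); (3,4,9); (3,4,10); (3,5,6); (3,5,8); (3,5,9); (3,5,10); (3,6,7); (3,6,8); (3,7,8); (3,7,9); (3,7,10); (3,8,9); (3,8,10); (3,9,10); (4,5,6); (4,5,7); (4,5,8); (4,5,9); (4,5,10); (4,6,8); (4,6,9); (4,6,10); (4,7,8); (4,7,9); (4,7,10); (4,8,9); (5,6,7); (5,6,8); (5,6,9); (5,6,10); (5,7,8); (5,7,10); (5,8,10); (5,9,10); (6,7,8); (6,7,9); (6,7,10); (6,8,9); (6,9,10); (7,8,10); (7,9,10); (8,9,10)].
Lemma chk11_129 : chk 10 L11_129 (7)%:Z 2%:Z. Proof. by vm_compute. Qed.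
Definition L11_146 : seq (nat*nat*nat) := [:: (0,1,2); (0,1,3); (0,1,4); (0,1,5); (0,1,6); (0,1,7); (0,1,8); (0,1,9); (0,1,10); (0,2,4); (0,2,5); (0,2,6); (0,2,7); (0,2,8); (0,2,9); (0,2,10); (0,3,4); (0,3,6); (0,3,7); (0,3,8); (0,3,9); (0,3,10); (0,4,5); (0,4,6); (0,4,7); (0,4,8); (0,4,10); (0,5,6); (0,5,7); (0,5,8); (0,5,9); (0,5,10); (0,6,7); (0,6,9); (0,6,10); (0,7,8); (0,7,9); (0,8,9); (0,8,10); (0,9,10); (1,2,3); (1,2,4); (1,2,5); (1,2,7); (1,2,8); (1,2,9); (1,3,5); (1,3,6); (1,3,7); (1,3,8); (1,3,9); (1,3,10); (1,4,5); (1,4,6); (1,4,7); (1,4,8); (1,4,9); (1,4,10); (1,5,6); (1,5,7); (1,5,9); (1,5,10); (1,6,7); (1,6,8); (1,6,9); (1,6,10); (1,7,8); (1,7,10); (1,8,9); (1,8,10); (1,9,10); (2,3,4); (2,3,5); (2,3,6); (2,3,7); (2,3,8); (2,3,10); (2,4,5); (2,4,6); (2,4,7); (2,4,9); (2,4,10); (2,5,6); (2,5,8); (2,5,9); (2,5,10); (2,6,7); (2,6,8); (2,6,9); (2,6,10); (2,7,8); (2,7,9); (2,7,10); (2,8,9); (2,8,10); (2,9,10); (3,4,5); (3,4,6); (3,4,7); (3,4,8); (3,4,9); (3,4,10); (3,5,6); (3,5,7); (3,5,8); (3,5,9); (3,5,10); (3,6,7); (3,6,8); (3,6,9); (3,7,9);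 (3,7,10); (3,8,9); (3,8,10); (3,9,10); (4,5,6); (4,5,7); (4,5,8); (4,5,9); (4,6,8); (4,6,9); (4,6,10); (4,7,8); (4,7,9); (4,7,10); (4,8,9); (4,8,10); (4,9,10); (5,6,7); (5,6,8); (5,6,10); (5,7,8); (5,7,9); (5,7,10); (5,8,9); (5,8,10); (5,9,10); (6,7,8); (6,7,9); (6,7,10); (6,8,9); (6,8,10); (6,9,10); (7,8,9); (7,8,10); (7,9,10)].
Lemma chk11_146 : chk 10 L11_146 (8)%:Z (- 2%:Z). Proof. by vm_compute. Qed.
Definition L11_147 : seq (nat*nat*nat) := [:: (0,1,2); (0,1,3); (0,1,4); (0,1,5); (0,1,6); (0,1,7); (0,1,8); (0,1,9); (0,1,10); (0,2,3); (0,2,4); (0,2,5); (0,2,6); (0,2,7); (0,2,8); (0,2,9); (0,2,10); (0,3,4); (0,3,5); (0,3,6); (0,3,7); (0,3,8); (0,3,9); (0,4,6); (0,4,7); (0,4,8); (0,4,9); (0,4,10); (0,5,6); (0,5,7); (0,5,8); (0,5,9); (0,5,10); (0,6,8); (0,6,9); (0,6,10); (0,7,8); (0,7,9); (0,7,10); (0,8,10); (0,9,10); (1,2,3); (1,2,4); (1,2,5); (1,2,7); (1,2,9); (1,2,10); (1,3,5); (1,3,6); (1,3,7); (1,3,8); (1,3,9); (1,3,10); (1,4,5); (1,4,6); (1,4,7); (1,4,8); (1,4,9); (1,4,10); (1,5,6); (1,5,8); (1,5,9); (1,5,10); (1,6,7); (1,6,8); (1,6,9); (1,6,10); (1,7,8);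 (1,7,9); (1,7,10); (1,8,9); (1,8,10); (2,3,4); (2,3,6); (2,3,7); (2,3,8); (2,3,9); (2,3,10); (2,4,5); (2,4,6); (2,4,7); (2,4,8); (2,4,10); (2,5,6); (2,5,7); (2,5,8); (2,5,9); (2,5,10); (2,6,7); (2,6,8); (2,6,9); (2,6,10); (2,7,8); (2,7,9); (2,8,9); (2,8,10); (2,9,10); (3,4,5); (3,4,6); (3,4,7); (3,4,8); (3,4,9); (3,4,10); (3,5,6); (3,5,7); (3,5,8); (3,5,9); (3,5,10); (3,6,7); (3,6,9); (3,6,10); (3,7,8); (3,7,10); (3,8,9); (3,8,10); (3,9,10); (4,5,6); (4,5,7); (4,5,8); (4,5,9); (4,5,10); (4,6,7); (4,6,8); (4,6,9); (4,7,9); (4,7,10); (4,8,9); (4,8,10); (4,9,10); (5,6,7); (5,6,8); (5,6,10); (5,7,8); (5,7,9); (5,7,10); (5,8,9); (5,9,10); (6,7,8); (6,7,9); (6,7,10); (6,8,9); (6,8,10); (6,9,10); (7,8,9); (7,8,10); (7,9,10); (8,9,10)].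
Lemma chk11_147 : chk 10 L11_147 (8)%:Z 1%:Z. Proof. by vm_compute. Qed.

Local Close Scope ring_scope.

Lemma case5 r : r \in [:: 3; 4; 6; 7]%N ->
  exists L lam eps, chk 4 L lam eps /\ size L = r.
Proof.
rewrite !inE => H.
repeat (case/orP: H => [/eqP -> | H]);
  try (by do 3 eexists; split; [apply: chk5_3 | by []]);
  try (by do 3 eexists; split; [apply: chk5_4 | by []]);
  try (by do 3 eexists; split; [apply: chk5_6 | by []]);
  try (by do 3 eexists; split; [apply: chk5_7 | by []]).
by move/eqP: H => ->; do 3 eexists; split; [apply: chk5_7 | by []].
Qed.

Lemma case11 r : r \in [:: 18; 19; 36; 37; 73; 74; 91; 92; 128; 129; 146; 147]%N ->
  exists L lam eps, chk 10 L lam eps /\ size L = r.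
Proof.
rewrite !inE => H.
repeat (case/orP: H => [/eqP -> | H]);
  try (by do 3 eexists; split; [apply: chk11_18 | by []]);
  try (by do 3 eexists; split; [apply: chk11_19 | by []]);
  try (by do 3 eexists; split; [apply: chk11_36 | by []]);
  try (by do 3 eexists; split; [apply: chk11_37 | by []]);
  try (by do 3 eexists; split; [apply: chk11_73 | by []]);
  try (by do 3 eexists; split; [apply: chk11_74 | by []]);
  try (by do 3 eexists; split; [apply: chk11_91 | by []]);
  try (by do 3 eexists; split; [apply: chk11_92 | by []]);
  try (by do 3 eexists; split; [apply: chk11_128 | by []]);
  try (by do 3 eexists; split; [apply: chk11_129 | by []]);
  try (by do 3 eexists; split; [apply: chk11_146 | by []]);
  try (by do 3 eexists; split; [apply: chk11_147 | by []]);
  idtac.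
by move/eqP: H => ->; do 3 eexists; split; [apply: chk11_147 | by []].
Qed.

Lemma res11 b : b %% 55 \in [:: 18; 19; 36; 37]%N ->
  b %% 165 \in [:: 18; 19; 36; 37; 73; 74; 91; 92; 128; 129; 146; 147]%N.
Proof.
move=> H.
have A : all (fun r => (r %% 55 \in [:: 18; 19; 36; 37]%N) ==>
   (r \in [:: 18; 19; 36; 37; 73; 74; 91; 92; 128; 129; 146; 147]%N)) (iota 0 165) by [].
have Hr : b %% 165 \in iota 0 165 by rewrite mem_iota add0n ltn_pmod.
move/allP: A => /(_ _ Hr) /implyP; apply.
by rewrite -(@modn_dvdm 165 b 55) in H.
Qed.

Theorem lemma4p1 :
  (forall b : nat, b %% 10 \in [:: 3; 4; 6; 7]%N ->
     exists F : seq {set 'I_5}, NWBTS F b) /\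
  (forall b : nat, b %% 55 \in [:: 18; 19; 36; 37]%N ->
     exists F : seq {set 'I_11}, NWBTS F b).
Proof.
split.
  move=> b Hb; have [L [lam [eps [Hc Hs]]]] := case5 Hb.
  exists (base 4 L ++ rep (b %/ 10) (full 5)).
  have E : b = (size L + b %/ 10 * 'C(5, 3))%N.
    by rewrite Hs addnC (_ : 'C(5, 3) = 10%N) // -divn_eq.
  by rewrite [X in NWBTS _ X]E; apply: (chk_ok _ Hc).
move=> b Hb; have [L [lam [eps [Hc Hs]]]] := case11 (res11 Hb).
exists (base 10 L ++ rep (b %/ 165) (full 11)).
have E : b = (size L + b %/ 165 * 'C(11, 3))%N.
  by rewrite Hs addnC (_ : 'C(11, 3) = 165%N) // -divn_eq.
by rewrite [X in NWBTS _ X]E; apply: (chk_ok _ Hc).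
Qed.
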